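(* Let $S$ be a $C^1$-differentiable semigroup in which idempotents commute pairwise. Then the set $E(S)$ of idempotents is discrete in the subspace topology.
   Context: A $C^1$-differentiable semigroup is a topological semigroup $S$ which is a $C^1$ manifold modelled on a Banach space and whose multiplication $S\times S\to S$ is of class $C^1$. $E(S)=\{e: e^2=e\}$. For an idempotent $f$, $G_f$ denotes the maximal subgroup of $S$ containing $f$ (the largest subgroup of $S$ with identity $f$); distinct idempotents have disjoint maximal subgroups. Known fact (Holmes) that may be used: for every $e\in E(S)$ there is an open neighbourhood $U_e$ of $e$ such that $fxf\in G_f$ for all $f\in E(S)\cap U_e$ and all $x\in U_e$. *)

(* Defs.v *)
From HB Require Import structures.
From mathcomp Require Import all_boot all_order all_algebra.
From mathcomp Require Import all_classical all_reals all_analysis.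
Set Implicit Arguments. Unset Strict Implicit. Unset Printing Implicit Defensive.
Import Order.TTheory GRing.Theory Num.Theory.
Import numFieldNormedType.Exports.
Local Open Scope classical_set_scope.
Local Open Scope ring_scope.

(* f is of class C^1 on the (open) set O: Frechet differentiable at every
   point of O, and the derivative x |-> 'd f x is continuous on O for the
   operator norm (written out: for every eps > 0, near x,
   ||'d f y - 'd f x||_op <= eps). *)
Definition C1_on {R : realType} {V W : normedModType R}
  (O : set V) (f : V -> W) : Prop :=
  (forall x, O x -> differentiable f x) /\
  (forall x, O x -> forall eps : R, 0 < eps ->
     \forall y \near x, forall v : V, `|'d f y v - 'd f x v| <= eps * `|v|).

Definition is_chart {R : realType} {E : normedModType R} {S : topologicalType}
  (U : set S) (phi : S -> E) (psi : E -> S) : Prop :=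
  [/\ open U, open (phi @` U),
      (forall x, U x -> psi (phi x) = x),
      {within U, continuous phi} &
      {within phi @` U, continuous psi}].

(* A C^1-differentiable semigroup: a (Hausdorff) topological semigroup
   (S, mul) which is a C^1 manifold modelled on the real Banach space E
   (an atlas with C^1 transition maps) and whose multiplication is C^1
   (its local representatives in product charts are C^1). *)
Definition C1_differentiable_semigroup {R : realType}
  (E : completeNormedModType R) (S : topologicalType) (mul : S -> S -> S) : Prop :=
  [/\ hausdorff_space S, associative mul,
      continuous (fun p : S * S => mul p.1 p.2) &
      exists (I : Type) (U : I -> set S) (phi : I -> S -> E) (psi : I -> E -> S),
        [/\ (forall i, is_chart (U i) (phi i) (psi i)),
            (forall x, exists i, U i x),
            (forall i j, C1_on (phi i @` (U i `&` U j)) (phi j \o psi i)) &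
            (forall i j k,
               C1_on [set ab : E * E | (phi i @` U i) ab.1 /\ (phi j @` U j) ab.2
                                       /\ U k (mul (psi i ab.1) (psi j ab.2))]
                     (fun ab : E * E => phi k (mul (psi i ab.1) (psi j ab.2))))]].

Definition idempotents {S : Type} (mul : S -> S -> S) : set S :=
  [set e | mul e e = e].

(* Main.v *)
Require Import Defs.
From HB Require Import structures.
From mathcomp Require Import all_boot all_order all_algebra.
From mathcomp Require Import all_classical all_reals all_analysis.
From mathcomp Require Import lra.
Import numFieldNormedType.Exports.
Local Open Scope classical_set_scope.
Import Order.TTheory GRing.Theory Num.Theory.

Section Aux.
Set Implicit Arguments. Unset Strict Implicit. Unset Printing Implicit Defensive.
Local Open Scope ring_scope.
Lemma mvi (R : realType) (W : normedModType R) (h : R -> W) (K : R) :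
  (forall t, 0 <= t <= 1 -> forall eta, 0 < eta -> exists2 del, 0 < del &
      forall s, `|s - t| < del -> `|h s - h t| <= (K + eta) * `|s - t|) ->
  `|h 1 - h 0| <= K.
Proof.
move=> loc; apply/ler_addgt0Pr => eta eta0.
set c := K + eta.
pose A := [set t : R | 0 <= t <= 1 /\ forall u, 0 <= u <= t -> `|h u - h 0| <= c * u].
have A0 : A 0.
  split; first by rewrite lexx ler01.
  move=> u /andP[u0 u1]; have -> : u = 0 by apply/eqP; rewrite eq_le u0 u1.
  by rewrite subrr normr0 mulr0.
have ubA : ubound A 1 by move=> t [/andP[_ ->]].
have hasA : has_sup A by split; [exists 0 | exists 1].
set s := sup A.
have s0 : 0 <= s by apply: sup_upper_bound.
have s1 : s <= 1 by apply: ge_sup => //; exists 0.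
have s01 : 0 <= s <= 1 by rewrite s0 s1.
have P : forall u, 0 <= u < s -> `|h u - h 0| <= c * u.
  move=> u /andP[u0 us]; have [y [_ Ay] uy] := sup_gt (ex_intro _ 0 A0) us.
  by apply: Ay; rewrite u0 ltW.
have Q : `|h s - h 0| <= c * s.
  have [->|sp] := eqVneq s 0; first by rewrite subrr normr0 mulr0.
  have spos : 0 < s by rewrite lt_neqAle eq_sym sp s0.
  have [del del0 Hd] := loc s s01 eta eta0.
  pose u := Num.max 0 (s - del / 2).
  have u0 : 0 <= u by rewrite le_max lexx.
  have us : u < s by rewrite gt_max spos /=; lra.
  have usd : `|u - s| < del.
    rewrite distrC ger0_norm ?subr_ge0 ?ltW //.
    have : s - del / 2 <= u by rewrite le_max lexx orbT.
    lra.
  have e1 := Hd u usd; have e2 := P u (ltac:(by rewrite u0 us)).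
  have -> : h s - h 0 = (h u - h 0) - (h u - h s) by rewrite [RHS]addrC opprB addrA subrK.
  rewrite (le_trans (ler_normB _ _)) //.
  have dus : `|u - s| = s - u by rewrite distrC ger0_norm // subr_ge0 ltW.
  rewrite dus in e1.
    have : `|h u - h 0| + `|h u - h s| <= c * u + c * (s - u) by apply: lerD; [exact: e2|exact: e1].
  by rewrite -mulrDr [u + _]addrC subrK.
have s_eq : s = 1.
  apply/eqP; rewrite eq_le s1 /=; rewrite leNgt; apply/negP => s_lt1.
  have [del del0 Hd] := loc s s01 eta eta0.
  pose t := Num.min 1 (s + del / 2).
  have st : s < t by rewrite lt_min s_lt1 /=; lra.
  have At : A t.
    split.
      by rewrite (le_trans s0 (ltW st)) /= ge_min lexx.
    move=> u /andP[u0 ut]; have [us|su] := ltP u s; first by apply: P; rewrite u0 us.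
    have usd : `|u - s| < del.
      rewrite ger0_norm ?subr_ge0 //.
      have : t <= s + del / 2 by rewrite ge_min lexx orbT.
      lra.
    have e1 := Hd u usd; rewrite ger0_norm ?subr_ge0 // in e1.
    have -> : h u - h 0 = (h u - h s) + (h s - h 0) by rewrite addrA subrK.
    rewrite (le_trans (ler_normD _ _)) //.
    have : `|h u - h s| + `|h s - h 0| <= c * (u - s) + c * s by apply: lerD; [exact: e1|exact: Q].
    by rewrite -mulrDr subrK.
  have := sup_upper_bound hasA At; rewrite -/s; lra.
by move: Q; rewrite s_eq mulr1.
Qed.
Lemma diff_approx (R : realType) (V W : normedModType R) (f : V -> W) (x : V) :
  differentiable f x -> forall eps : R, 0 < eps ->
  exists2 del : R, 0 < del & forall h : V, `|h| < del ->
    `|f (h + x) - f x - 'd f x h| <= eps * `|h|.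
Proof.
move=> /diff_locally H eps e0.
have := H; move/eqaddoP => /(_ eps e0) /nbhs_ballP [del del0 Hd].
exists del => // h hd.
have hb : ball (0:V) del h by rewrite -ball_normE /ball_ /= sub0r normrN.
move: (Hd h hb) => /=.
by rewrite opprD addrA.
Qed.

Lemma zmod_key (W : zmodType) (u1 u2 m1 m2 D1 D2 L : W) :
  u1 - u2 - (m1 - m2) = (u1 - m1 - D1) - (u2 - m2 - D2) + (D1 - L) - (D2 - L).
Proof.
rewrite !opprD !opprK !addrA.
by rewrite [RHS](ACl ((1*4*2*5)*((7*3)*(6*9)*(10*8)))) /= !subrr !addr0.
Qed.

Lemma t2 (R : realType) (r al be t : R) : al < r -> be < r -> 0 <= t -> t <= 1 -> (1 - t) * al + t * be < r.
Proof.
move=> ha hb t0 t1.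
have P2 : 0 <= t * (r - be) by apply: mulr_ge0 => //; lra.
have [tl|te] := ltP t 1.
  have P1 : 0 < (1 - t) * (r - al) by apply: mulr_gt0; lra.
  nra.
have -> : t = 1 by apply/eqP; rewrite eq_le t1 te.
lra.
Qed.
Lemma t3 (R : realType) (E : normedModType R) (a b c : E) (t : R) :
  c - (a + t *: (b - a)) = (1 - t) *: (c - a) + t *: (c - b).
Proof.
rewrite scalerBl scale1r !scalerBr !opprD !opprK !addrA.
by rewrite [RHS](ACl ((1*2*6*4)*(5*3))) /= subrr addr0.
Qed.


Lemma arith1 (R : realType) (eta eta' nd : R) : 0 < eta' -> 0 <= nd ->
  eta' * (2 * (nd + 1)) = eta -> 2 * eta' * nd <= eta.
Proof. move=> *; nra. Qed.
Lemma arith2 (R : realType) (x1 x2 x3 x4 e' nd nst eta : R) : 0 <= nst -> 0 <= nd ->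
  x1 <= e' * (nst * nd) -> x2 <= e' * (nst * nd) -> x3 <= 4^-1 * (nst * nd) ->
  x4 <= 4^-1 * (nst * nd) -> 2 * e' * nd <= eta ->
  x1 + x2 + x3 + x4 <= (2^-1 * nd + eta) * nst.
Proof. move=> h1 h2 h3 h4 h5 h6 h7. have := ler_wpM2r h1 h7. nra. Qed.
Lemma core (R : realType) (E : normedModType R) (M : E * E -> E) (c : E) (r : R) :
  (forall p : E * E, `|c - p.1| < r -> `|c - p.2| < r ->
     differentiable M p /\ forall w, `|'d M p w - 'd M (c, c) w| <= 4^-1 * `|w|) ->
  forall a b : E, `|c - a| < r -> `|c - b| < r ->
  M (a, a) = a -> M (a, b) = b -> M (b, a) = b -> M (b, b) = b -> a = b.
Proof.
move=> HM a b ca cb Maa Mab Mba Mbb.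
set d := b - a.
pose h := fun t : R => M (a + t *: d, b) - M (a + t *: d, a).
have hK : `|h 1 - h 0| <= 2^-1 * `|d|.
  apply: mvi => t /andP[t0 t1] eta eta0.
  set x := a + t *: d.
  have cx : `|c - x| < r.
    rewrite /x /d t3; apply: le_lt_trans (ler_normD _ _) _.
    rewrite !normrZ (ger0_norm t0) ger0_norm ?subr_ge0 //.
    exact: t2.
  have [db Db] := HM (x, b) cx cb.
  have [da Da] := HM (x, a) cx ca.
  have nd0 : 0 <= `|d| by [].
  pose eta' := eta / (2 * (`|d| + 1)).
  have eta'E : eta' * (2 * (`|d| + 1)) = eta.
    rewrite /eta' mulrVK //; rewrite unitfE; apply/lt0r_neq0; lra.
  have eta'0 : 0 < eta'.
    rewrite /eta' divr_gt0 //; lra.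
  have [d1 d10 H1] := diff_approx db eta'0.
  have [d2 d20 H2] := diff_approx da eta'0.
  exists (Num.min d1 d2 / (`|d| + 1)).
    by rewrite divr_gt0 // ?lt_min ?d10 ?d20 //; lra.
  move=> s st.
  pose w : E * E := ((s - t) *: d, 0).
  have nw : `|w| = `|s - t| * `|d|.
    rewrite prod_normE /= normr0 normrZ; apply/max_idPl.
    by apply: mulr_ge0.
  have hm : `|s - t| * (`|d| + 1) < Num.min d1 d2.
    by rewrite -ltr_pdivlMr //; lra.
  have m1 : Num.min d1 d2 <= d1 by rewrite ge_min lexx.
  have m2 : Num.min d1 d2 <= d2 by rewrite ge_min lexx orbT.
  have nst : 0 <= `|s - t| by [].
  have dd : `|s - t| * `|d| <= `|s - t| * (`|d| + 1) by rewrite ler_wpM2l //; lra.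
  have w1 : `|w| < d1 by rewrite nw; apply: le_lt_trans dd (lt_le_trans hm m1).
  have w2 : `|w| < d2 by rewrite nw; apply: le_lt_trans dd (lt_le_trans hm m2).
  have hs : h s = M (w + (x, b)) - M (w + (x, a)).
    rewrite /h /w /x /=; congr (M (_, _) - M (_, _)) => /=;
      by rewrite ?add0r // addrCA -scalerDl subrK.
  rewrite hs /h -/x (zmod_key _ _ _ _ ('d M (x, b) w) ('d M (x, a) w) ('d M (c, c) w)).
  have e1 := H1 w w1; have e2 := H2 w w2; have e3 := Db w; have e4 := Da w.
  set A1 := M (w + (x, b)) - M (x, b) - 'd M (x, b) w in e1 *.
  set A2 := M (w + (x, a)) - M (x, a) - 'd M (x, a) w in e2 *.
  set A3 := 'd M (x, b) w - 'd M (c, c) w in e3 *.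
  set A4 := 'd M (x, a) w - 'd M (c, c) w in e4 *.
  have tri : `|A1 - A2 + A3 - A4| <= `|A1| + `|A2| + `|A3| + `|A4|.
    apply: le_trans (ler_normB _ _) _; rewrite lerD2r.
    apply: le_trans (ler_normD _ _) _; rewrite lerD2r.
    exact: ler_normB.
  apply: le_trans tri _.
  rewrite nw in e1 e2 e3 e4.
  have key : 2 * eta' * `|d| <= eta by apply: arith1.
  exact: arith2 nst nd0 e1 e2 e3 e4 key.
have h1 : h 1 = b - b.
  by rewrite /h scale1r [a + _]addrC /d subrK Mbb Mba.
have h0 : h 0 = b - a.
  by rewrite /h scale0r addr0 Mab Maa.
move: hK; rewrite h1 h0 subrr sub0r normrN -/d => hK.
have : `|d| <= 0 by lra.
by rewrite normr_le0 subr_eq0 => /eqP.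
Qed.

Lemma main_aux (R : realType) (E : completeNormedModType R)
  (S : topologicalType) (mul : S -> S -> S) :
  C1_differentiable_semigroup E mul ->
  (forall e f, idempotents mul e -> idempotents mul f -> mul e f = mul f e) ->
  forall e, idempotents mul e ->
    exists U : set S, [/\ open U, U e &
      forall f, U f -> idempotents mul f -> f = e].
Proof.
move=> [_ assoc mulc [I [U [phi [psi [charts cover _ C1mul]]]]]] comm e ee.
have [i Ue] := cover e.
have [oU oPU psiphi phic psic] := charts i.
have [Md Mc] := C1mul i i i.
pose M := (fun ab : E * E => phi i (mul (psi i ab.1) (psi i ab.2))).
rewrite -/M in Md Mc.
set c := phi i e.
have Pc : (phi i @` U i) c by exists e.
have psice : psi i c = e by apply: psiphi.
have phicont : {for e, continuous (phi i)}.
  by move: phic; rewrite continuous_open_subspace // => /(_ e (mem_set Ue)).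
have psicont : {for c, continuous (psi i)}.
  by move: psic; rewrite continuous_open_subspace // => /(_ c (mem_set Pc)).
have mulcont := mulc (e, e).
have nPc : nbhs c (phi i @` U i) by apply: open_nbhs_nbhs.
have nA : \forall ab \near (c, c), (phi i @` U i) ab.1 /\ (phi i @` U i) ab.2 /\
                                   U i (mul (psi i ab.1) (psi i ab.2)).
  near=> ab; split; [|split].
  - by near: ab; apply: cvg_fst.
  - by near: ab; apply: cvg_snd.
  - near: ab.
    have gc : (fun ab : E * E => (psi i ab.1, psi i ab.2)) @ (c, c) --> (e, e).
      apply: cvg_pair => /=; rewrite -psice.
        by apply: (cvg_comp fst (psi i) _ psicont); exact: cvg_fst.
      by apply: (cvg_comp snd (psi i) _ psicont); exact: cvg_snd.
    have := cvg_comp _ _ gc mulcont; rewrite /= (ee : mul e e = e) => /(_ (U i)).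
    by apply; apply: open_nbhs_nbhs.
have Ac : (phi i @` U i) (c, c).1 /\ (phi i @` U i) (c, c).2 /\
          U i (mul (psi i (c, c).1) (psi i (c, c).2)).
  by rewrite /= psice (ee : mul e e = e).
have [r0 r00 Hr] := iffLR (nbhs_ballP _ _) (filterI nA (Mc (c, c) Ac (4^-1) ltac:(by []))).

have coreH : forall p : E * E, `|c - p.1| < r0 -> `|c - p.2| < r0 ->
     differentiable M p /\ forall w, `|'d M p w - 'd M (c, c) w| <= 4^-1 * `|w|.
  move=> p p1 p2.
  have bp : ball (c, c) r0 p.
    by rewrite -ball_normE /ball_ /= prod_normE gt_max p1 p2.
  have [Ap Bp] := Hr p bp.
  by split; [exact: Md|exact: Bp].
pose N := [set x | U i x /\ `|c - phi i x| < r0].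
have nN : nbhs e N.
  apply: filterI; first by apply: open_nbhs_nbhs.
  have hb : nbhs (phi i e) (ball c r0) := nbhsx_ballx c r0 r00.
  by move: (phicont _ hb); rewrite -ball_normE.
have nmul : \forall x \near e, N (mul e x).
  have := mulcont N; rewrite /= (ee : mul e e = e) => /(_ nN) [[A B] /= [nA' nB] sAB].
  apply: filterS nB => x Bx.
  exact: (sAB (e, x) (conj (nbhs_singleton nA') Bx)).
have hN2 : nbhs e (N `&` (fun x => N (mul e x))) by apply: filterI.
move: hN2; rewrite nbhsE; case=> W [oW We] sW.
have key : forall x y, N x -> N y -> idempotents mul x -> idempotents mul y ->
    mul x y = y -> mul y x = y -> x = y.
  move=> x y [Ux nx] [Uy ny] xx yy xy yx.
  have : phi i x = phi i y.
    apply: (@core _ _ M c r0 coreH _ _ nx ny); rewrite /M /= ?psiphi //.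
    - by rewrite (xx : mul x x = x).
    - by rewrite xy.
    - by rewrite yx.
    - by rewrite (yy : mul y y = y).
  by move=> pxy; rewrite -(psiphi x Ux) pxy psiphi.
exists W; split => // f Wf ff.
have [Nf Nef] := sW f Wf.
have ee' : mul e e = e := ee.
have ff' : mul f f = f := ff.
have efc : mul e f = mul f e := comm e f ee ff.
set g := mul e f in Nef efc.
have eg : mul e g = g by rewrite /g assoc ee'.
have ge : mul g e = g by rewrite /g -assoc -efc assoc ee'.
have fg : mul f g = g by rewrite /g assoc -efc -assoc ff'.
have gf : mul g f = g by rewrite /g -assoc ff'.
have gg : idempotents mul g by rewrite /idempotents /= {1}/g assoc ge gf.
have [Ne _] := sW e We.
have e_g := key e g Ne Nef ee gg eg ge.
have f_g := key f g Nf Nef ff gg fg gf.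
by rewrite f_g -e_g.
Unshelve. all: by end_near. Qed.
End Aux.
Unset Implicit Arguments.

Theorem corollary6p3 (R : realType) (E : completeNormedModType R)
  (S : topologicalType) (mul : S -> S -> S) :
  C1_differentiable_semigroup E mul ->
  (forall e f, idempotents mul e -> idempotents mul f -> mul e f = mul f e) ->
  forall e, idempotents mul e ->
    exists U : set S, [/\ open U, U e &
      forall f, U f -> idempotents mul f -> f = e].
Proof. exact: main_aux. Qed.
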